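(* Let $B$ be a crystal, $b\in B$ and $b_\mu\in B_S$ such that $\mathrm{wt}(b)+\mathrm{wt}(b_\mu)\in P_+$. Then for every $i\in\{1,\dots,n\}$, $\tilde e_ib_\mu\neq0$ implies $\tilde f_ib\ne0$.
   Context: Let $\mathfrak g$ be of type $D_n$, weights $(\lambda_1,\dots,\lambda_n)$ in an orthonormal basis $\epsilon_j$, simple roots $\alpha_j=\epsilon_j-\epsilon_{j+1}$ ($j<n$), $\alpha_n=\epsilon_{n-1}+\epsilon_n$, $P_+$ the dominant integral weights ($\lambda_j\in\frac12\mathbb Z$, $\lambda_j-\lambda_k\in\mathbb Z$, $\lambda_1\ge\dots\ge\lambda_n$, $\lambda_{n-1}+\lambda_n\ge0$). A crystal means a normal crystal whose connected components are Kashiwara crystals $B_\lambda$ of irreducible $U_q(\mathfrak g)$-modules; in particular $\varepsilon_i(b)=\max\{k:\tilde e_i^kb\ne0\}$, $\varphi_i(b)=\max\{k:\tilde f_i^kb\ne0\}$ and $\varphi_i(b)-\varepsilon_i(b)=\langle\mathrm{wt}(b),\alpha_i^\vee\rangle$. The spinor crystal $B_S$: sign vectors $(i_1,\dots,i_n)$ of weight $\frac12\sum i_j\epsilon_j$; for $j<n$, $\tilde f_j$ turns $(i_j,i_{j+1})=(+,-)$ into $(-,+)$ (else $0$), $\tilde e_j$ the reverse; $\tilde f_n$ turns $(i_{n-1},i_n)=(+,+)$ into $(-,-)$ (else $0$), $\tilde e_n$ the reverse. *)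

(* Defs.v *)
From mathcomp Require Import all_boot all_order all_algebra.
Set Implicit Arguments. Unset Strict Implicit. Unset Printing Implicit Defensive.
Import Order.TTheory GRing.Theory Num.Theory.
Local Open Scope ring_scope.

(* Indices: the paper's index i in {1,...,n} is represented by i : 'I_n with
   value i-1; similarly weight coordinates lambda_j are lambda (j-1).
   A weight is a function 'I_n -> rat (coordinates in the basis eps_j). *)

Definition coord (n : nat) (l : 'I_n -> rat) (k : nat) : rat :=
  match insub k with Some j => l j | None => 0 end.

(* <lambda, alpha_i^vee>; type D_n is simply laced, alpha_i^vee = alpha_i.
   0-based i < n-1 : alpha = eps_{i} - eps_{i+1};  i = n-1 : eps_{n-2} + eps_{n-1} *)
Definition pairing (n : nat) (l : 'I_n -> rat) (i : 'I_n) : rat :=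
  if (i.+1 < n)%N then coord l i - coord l i.+1
  else coord l (n - 2)%N + coord l (n - 1)%N.

Definition simple_root (n : nat) (i : 'I_n) : 'I_n -> rat := fun j =>
  if (i.+1 < n)%N then ((val j == val i)%:R - (val j == i.+1)%:R)
  else ((val j == (n - 2)%N)%:R + (val j == (n - 1)%N)%:R).

Definition integral_weight (n : nat) (l : 'I_n -> rat) : Prop :=
  (forall j, 2 * l j \is a Num.int) /\ (forall j k, l j - l k \is a Num.int).

Definition dominant (n : nat) (l : 'I_n -> rat) : Prop :=
  integral_weight l /\
  (forall j k : 'I_n, (val j <= val k)%N -> l k <= l j) /\
  0 <= coord l (n - 2)%N + coord l (n - 1)%N.

Fixpoint iter_opt (B : Type) (g : B -> option B) (k : nat) (b : B) : option B :=
  match k with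
  | 0 => Some b
  | k.+1 => obind g (iter_opt g k b)
  end.

Definition string_len (B : Type) (g : B -> option B) (b : B) (k : nat) : Prop :=
  iter_opt g k b <> None /\ iter_opt g k.+1 b = None.

(* A (seminormal) crystal of type D_n on the carrier B, with weight map wt and
   Kashiwara operators e, f (None standing for 0):
   - e_i b = b' iff f_i b' = b, and wt(e_i b) = wt b + alpha_i;
   - weights are integral;
   - eps_i(b) = max{k : e_i^k b <> 0}, phi_i(b) = max{k : f_i^k b <> 0} exist
     and phi_i(b) - eps_i(b) = <wt b, alpha_i^vee>. *)
Definition normal_crystal (n : nat) (B : Type) (wt : B -> 'I_n -> rat)
    (e f : 'I_n -> B -> option B) : Prop :=
  (forall i b b', e i b = Some b' <-> f i b' = Some b) /\
  (forall i b b', e i b = Some b' -> forall j, wt b' j = wt b j + simple_root i j) /\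
  (forall b, integral_weight (wt b)) /\
  (forall i b, exists eps phi : nat,
     string_len (e i) b eps /\ string_len (f i) b phi /\
     (phi%:R - eps%:R : rat) = pairing (wt b) i).

(* The spinor crystal B_S: sign vectors, true = +, false = - *)
Definition spinor (n : nat) := {ffun 'I_n -> bool}.

Definition sgn (n : nat) (s : spinor n) (k : nat) : bool :=
  match insub k with Some j => s j | None => false end.

Definition spin_wt (n : nat) (s : spinor n) : 'I_n -> rat :=
  fun j => if s j then 1 / 2 else - (1 / 2).

Definition spin_f (n : nat) (i : 'I_n) (s : spinor n) : option (spinor n) :=
  if (i.+1 < n)%N then
    (if sgn s i && ~~ sgn s i.+1 then
       Some [ffun j : 'I_n => if val j == val i then false
                             else if val j == i.+1 then true else s j]
     else None)
  else
    (if sgn s (n - 2)%N && sgn s (n - 1)%N then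
       Some [ffun j : 'I_n => if (val j == (n - 2)%N) || (val j == (n - 1)%N) then false
                             else s j]
     else None).

Definition spin_e (n : nat) (i : 'I_n) (s : spinor n) : option (spinor n) :=
  if (i.+1 < n)%N then
    (if ~~ sgn s i && sgn s i.+1 then
       Some [ffun j : 'I_n => if val j == val i then true
                             else if val j == i.+1 then false else s j]
     else None)
  else
    (if ~~ sgn s (n - 2)%N && ~~ sgn s (n - 1)%N then
       Some [ffun j : 'I_n => if (val j == (n - 2)%N) || (val j == (n - 1)%N) then true
                             else s j]
     else None).

(* Main.v *)
Require Import Defs.
From mathcomp Require Import all_boot all_order all_algebra.
From mathcomp Require Import lra.
Import Order.TTheory GRing.Theory Num.Theory.
Local Open Scope ring_scope.

Lemma coordE n (l : 'I_n -> rat) k (hk : (k < n)%N) : Defs.coord l k = l (Ordinal hk).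
Proof. by rewrite /Defs.coord insubT. Qed.

Lemma sgnE n (s : spinor n) k (hk : (k < n)%N) : sgn s k = s (Ordinal hk).
Proof. by rewrite /sgn insubT. Qed.

Lemma iter_none (B : Type) (g : B -> option B) b : g b = None ->
  forall k, iter_opt g k.+1 b = None.
Proof. by move=> H; elim=> [|k IH] //=; rewrite -/(iter_opt g k.+1 b) IH. Qed.

Theorem lemma4p5 (n : nat) (hn : (2 <= n)%N)
  (B : Type) (wt : B -> 'I_n -> rat) (e f : 'I_n -> B -> option B)
  (HB : normal_crystal wt e f)
  (b : B) (bmu : spinor n)
  (Hdom : dominant (fun j => wt b j + spin_wt bmu j)) :
  forall i : 'I_n, spin_e i bmu <> None -> f i b <> None.
Proof.
move=> i He Hf.
case: HB => _ [_ [_ Hstr]].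
have [eps [phi [_ [[Hp1 Hp2] Hpe]]]] := Hstr i b.
case: Hdom => _ [Hmono Hlast].
suff H1 : 1 <= pairing (wt b) i.
  have Hphi : (0 < phi)%N.
    rewrite lt0n; apply/negP => /eqP E; move: Hpe H1; rewrite E => <-.
    have : 0 <= (eps%:R : rat) by rewrite ler0n.
    lra.
  apply: Hp1; case: phi Hphi {Hp2 Hpe} => // k _; exact: iter_none.
move: He; rewrite /spin_e /pairing.
case: ifP => hi.
  case: ifP => // /andP [s0 s1] _.
  have hi0 : (i < n)%N by exact: ltn_ord.
  rewrite (@coordE _ _ _ hi0) (@coordE _ _ _ hi).
  move: s0 s1; rewrite (@sgnE _ _ _ hi0) (@sgnE _ _ _ hi) => s0 s1.
  have := Hmono (Ordinal hi0) (Ordinal hi) (leqnSn _).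
  rewrite /spin_wt (negbTE s0) s1.
  have -> : Ordinal hi0 = i by apply: val_inj.
  lra.
case: ifP => // /andP [s0 s1] _.
have h2 : (n - 2 < n)%N by rewrite ltn_subrL; case: n hn {i hi Hf Hstr Hp1 Hp2 Hpe Hmono Hlast bmu wt e f s0 s1}.
have h1 : (n - 1 < n)%N by rewrite ltn_subrL; case: n hn {i hi Hf Hstr Hp1 Hp2 Hpe Hmono Hlast bmu wt e f s0 s1 h2}.
move: Hlast; rewrite (@coordE _ _ _ h2) (@coordE _ _ _ h1) (@coordE _ _ _ h2) (@coordE _ _ _ h1).
move: s0 s1; rewrite (@sgnE _ _ _ h2) (@sgnE _ _ _ h1) => s0 s1.
rewrite /spin_wt (negbTE s0) (negbTE s1).
lra.
Qed.
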